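(* With $d_k$ as defined below, for every $0\le k\le q-1$, $$d_k=-(-1)^{k+\lfloor k/p\rfloor}\,k!\binom{q/p-1}{\lfloor k/p\rfloor}.$$
   Context: $\mathbf{F}_q$ has characteristic $p$. $M(k,b,D)$ denotes the number of ordered $k$-tuples of pairwise distinct elements of $D\subseteq\mathbf{F}_q$ with sum $b$. $d_0=-1$ and $d_k=M(k,1,\mathbf{F}_q^* )-M(k,0,\mathbf{F}_q^* )$ for $k\ge1$. Binomial coefficients $\binom{x}{m}=x(x-1)\cdots(x-m+1)/m!$ for real $x$, integer $m\ge0$. *)

(* Defs.v *)
From HB Require Import structures.
From mathcomp Require Import all_boot all_order all_algebra all_field.
Set Implicit Arguments. Unset Strict Implicit. Unset Printing Implicit Defensive.
Import GRing.Theory Num.Theory.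
Local Open Scope ring_scope.

Definition Mcount (F : finFieldType) (k : nat) (b : F) (D : {pred F}) : nat :=
  #|[pred t : k.-tuple F | [&& uniq t, all (fun x => x \in D) t &
                               \sum_(x <- t) x == b]]|.

Definition Fstar (F : finFieldType) : {pred F} := [pred x : F | x != 0].

Definition dk (F : finFieldType) (k : nat) : int :=
  if k is 0 then -1
  else (@Mcount F k 1 (@Fstar F))%:Z - (@Mcount F k 0 (@Fstar F))%:Z.

(* Main.v *)
Require Import Defs.
From HB Require Import structures.
From mathcomp Require Import all_boot all_order all_algebra all_field.
Set Implicit Arguments. Unset Strict Implicit. Unset Printing Implicit Defensive.
Import GRing.Theory Num.Theory.
Local Open Scope ring_scope.

Section L1.
Variable F : finFieldType.

Definition Nset (D : {pred F}) (k : nat) (b : F) : nat :=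
  #|[set A : {set F} | [&& A \subset D, #|A| == k & \sum_(x in A) x == b]]|.

Lemma card_perm_tuples (T : finType) (k : nat) (s : seq T) :
  uniq s -> size s = k -> #|[pred t : k.-tuple T | perm_eq t s]| = k`!.
Proof.
move=> us sk.
rewrite -sk -size_permutations // cardE -(size_map val).
apply/perm_size/uniq_perm.
- by rewrite (map_inj_uniq val_inj) enum_uniq.
- exact: permutations_uniq.
move=> u; rewrite mem_permutations; apply/mapP/idP.
  by case=> t; rewrite mem_enum /= => pt ->.
move=> pu; have su : size u == size s by rewrite (perm_size pu).
by exists (Tuple su); rewrite // mem_enum.
Qed.

Lemma Mcount_Nset (k : nat) (b : F) (D : {pred F}) :
  Mcount k b D = (k`! * Nset D k b)%N.
Proof.
rewrite /Mcount /Nset -[LHS]sum1_card.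

rewrite (partition_big (fun t : k.-tuple F => [set x in t]) predT) //=.
rewrite mulnC -sum_nat_const [RHS]big_mkcond /=.

apply: eq_bigr => A _.
rewrite sum1_card inE.
case: ifP => [/and3P[AD /eqP Ak /eqP Ab] | nA].
  rewrite -(card_perm_tuples (enum_uniq (mem A))); last by rewrite -cardE.
  apply: eq_card => t; rewrite -topredE /= !inE.
  apply/idP/idP.
    case/andP=> /and3P[ut _ _] /eqP tA.
    apply: uniq_perm => //; first exact: enum_uniq.
    by move=> x; rewrite mem_enum -tA inE.
  move=> pt.
  have tA : [set x in t] = A by apply/setP => x; rewrite inE (perm_mem pt) mem_enum.

  rewrite tA eqxx andbT (perm_uniq pt) enum_uniq /=.
  rewrite (perm_big _ pt) big_enum /= Ab eqxx andbT.
  by apply/allP => x; rewrite (perm_mem pt) mem_enum => /(subsetP AD).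
apply: eq_card0 => t; rewrite -topredE /= !inE.
apply/negbTE/negP => /andP[/and3P[ut tD tb] /eqP tA].
move/negbT: nA; rewrite -tA; apply/negP/negPn/and3P; split.
- by apply/subsetP => x; rewrite inE => /(allP tD).
- by rewrite cardsE (card_uniqP ut) size_tuple.

by rewrite (big_uniq _ ut) in tb; rewrite (eq_bigl (fun x => x \in t)) // => x; rewrite inE.
Qed.

Lemma sub_Fstar (A : {set F}) : (A \subset @Fstar F) = (0 \notin A).
Proof.
apply/subsetP/idP => [H | H x xA]; first by apply/negP => /H; rewrite inE eqxx.
by rewrite inE; apply: contraNneq H => <-.
Qed.

Lemma sub_predT (A : {set F}) : A \subset (predT : {pred F}).
Proof. by apply/subsetP. Qed.

Lemma S_split k b : (0 < k)%N ->
  Nset predT k b = (Nset (@Fstar F) k b + Nset (@Fstar F) k.-1 b)%N.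
Proof.
move=> k0; rewrite /Nset.
set X := [set A | _].
rewrite -(cardsID [set A : {set F} | 0 \in A] X) addnC.
congr (_ + _)%N.
  apply: eq_card => A; rewrite !inE sub_Fstar sub_predT /=.
  by case: (0 \in A).
set Y := (Z in _ = #|Z|).
rewrite -(@card_in_imset _ _ (fun A => 0 |: A) Y); last first.
  move=> A B; rewrite !inE !sub_Fstar => /andP[A0 _] /andP[B0 _] eAB.
  by rewrite -(setU1K A0) -(setU1K B0) eAB.
apply: eq_card => B; rewrite !inE sub_predT /=; apply/idP/idP.
  case/andP => /andP[/eqP Bk /eqP Bb] B0.
  apply/imsetP; exists (B :\ 0); last by rewrite setD1K.
  rewrite inE sub_Fstar !inE eqxx /=.
  have e := setD1K B0.
  rewrite -e in Bk Bb; rewrite cardsU1 !inE eqxx /= in Bk.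
  rewrite big_setU1 ?inE ?eqxx //= add0r in Bb.
  by rewrite -Bk Bb eqxx add1n /= eqxx.
case/imsetP => A; rewrite inE sub_Fstar => /andP[A0 /andP[/eqP Ak /eqP Ab]] ->.
rewrite !inE eqxx cardsU1 A0 Ak big_setU1 //= add0r Ab eqxx andbT.
by rewrite andbT add1n prednK.
Qed.

End L1.

Section Cls.
Variables (F : finFieldType) (p : nat).
Hypothesis hp : p \in [pchar F].

Let pr : prime p := pcharf_prime hp.
Let p_gt0 : (0 < p)%N := prime_gt0 pr.
Let p0 : p%:R = 0 :> F := pcharf0 hp.

Lemma natr_mod n : (n %% p)%:R = n%:R :> F.
Proof. by rewrite [in RHS](divn_eq n p) natrD natrM p0 mulr0 add0r. Qed.

Definition cls (x : F) : {set F} := [set x + (val i)%:R | i : 'I_p].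

Lemma clsP x y : reflect (exists n : nat, y = x + n%:R) (y \in cls x).
Proof.
apply: (iffP imsetP) => [[i _ ->] | [n ->]]; first by exists (val i).
by exists (Ordinal (ltn_pmod n p_gt0)); rewrite //= natr_mod.
Qed.

Lemma cls_refl x : x \in cls x.
Proof. by apply/clsP; exists 0%N; rewrite addr0. Qed.

Lemma cls_sym x y : y \in cls x -> x \in cls y.
Proof.
case/clsP => n ->; apply/clsP; exists (n * p.-1)%N.
have e : (n + n * p.-1 = n * p)%N by rewrite -{1}(muln1 n) -mulnDr add1n prednK.
by rewrite -addrA -natrD e natrM p0 mulr0 addr0.
Qed.

Lemma cls_trans x y z : y \in cls x -> z \in cls y -> z \in cls x.
Proof.
by case/clsP => n -> /clsP[m ->]; apply/clsP; exists (n + m)%N; rewrite natrD addrA.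
Qed.

Lemma cls_eq x y : y \in cls x -> cls y = cls x.
Proof.
move=> yx; apply/setP => z; apply/idP/idP => [zy | zx]; first exact: cls_trans zy.
exact: cls_trans (cls_sym yx) zx.
Qed.

Lemma natr_inj_p (i j : nat) : (i < p)%N -> (j < p)%N -> i%:R = j%:R :> F -> i = j.
Proof.
wlog le_ij : i j / (i <= j)%N.
  by move=> H ip jp e; case: (leqP i j) => [/H|/ltnW/H]; [apply | move=> H'; symmetry; apply: H'].
move=> ip jp e.
have : (p %| j - i)%N by rewrite (dvdn_pcharf hp) natrB // e subrr.
case: (posnP (j - i)) => [/eqP | pos].
  by rewrite subn_eq0 => ji _; apply/eqP; rewrite eqn_leq le_ij ji.
rewrite gtnNdvd //; apply: leq_ltn_trans jp; exact: leq_subr.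
Qed.

Lemma card_cls x : #|cls x| = p.
Proof.
rewrite card_imset; first by rewrite card_ord.
move=> i j /addrI e.
by apply: val_inj; exact: natr_inj_p (ltn_ord i) (ltn_ord j) e.
Qed.

Definition sig := \sum_(i < p) (i : nat)%:R : F.

Lemma sum_cls x : \sum_(y in cls x) y = sig.
Proof.
rewrite big_imset /=; last by move=> i j _ _ /addrI e; apply: val_inj; exact: natr_inj_p (ltn_ord i) (ltn_ord j) e.
rewrite big_split /= sumr_const card_ord -mulr_natr p0 mulr0 add0r.
by [].
Qed.


Definition Pcls : {set {set F}} := [set cls x | x in [set: F]].

Lemma Pcls_partition : partition Pcls [set: F].
Proof.
have -> : Pcls = equivalence_partition (fun x y => y \in cls x) [set: F].
  apply: eq_imset => x; apply/setP => y; rewrite !inE //.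
apply: equivalence_partitionP => x y z _ _ _; split; first exact: cls_refl.
move=> xy; apply/idP/idP => [xz | yz].
  exact: cls_trans (cls_sym xy) xz.
exact: cls_trans xy yz.
Qed.

Lemma Pcls_triv : trivIset Pcls.
Proof. exact: partition_trivIset Pcls_partition. Qed.

Lemma card_Pcls : (#|Pcls| * p)%N = #|F|.
Proof.
rewrite -cardsT (card_partition Pcls_partition) -sum_nat_const.
by apply: eq_bigr => C /imsetP[x _ ->]; rewrite card_cls.
Qed.

Definition good (A : {set F}) := [forall x in A, cls x \subset A].

Definition QA (A : {set F}) : {set {set F}} := [set C in Pcls | C \subset A].

Lemma good_cover A : good A -> cover (QA A) = A.
Proof.
move=> gA; apply/setP => x; apply/bigcupP/idP => [[C] | xA].
  by rewrite inE => /andP[_ /subsetP CA] /CA.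
exists (cls x); last exact: cls_refl.
by rewrite inE imset_f ?inE //= (forall_inP gA).
Qed.

Lemma cover_good (Q : {set {set F}}) : Q \subset Pcls -> good (cover Q) /\ QA (cover Q) = Q.
Proof.
move=> QP.
have key : forall x C, C \in Q -> x \in C -> cls x = C.
  move=> x C CQ xC; have := subsetP QP _ CQ; case/imsetP => y _ Cy.
  by rewrite Cy in xC *; apply: cls_eq.
split.
  apply/forall_inP => x /bigcupP[C CQ xC].
  by rewrite (key x C CQ xC); exact: bigcup_sup.
apply/setP => C; rewrite inE; apply/andP/idP => [[CP CA] | CQ].
  case/imsetP: CP => y _ Cy.
  have : y \in cover Q by apply: (subsetP CA); rewrite Cy cls_refl.
  case/bigcupP => C' C'Q yC'.
  by rewrite Cy (key y C' C'Q yC').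
by split; [exact: (subsetP QP) | exact: bigcup_sup].
Qed.

Lemma card_cover (Q : {set {set F}}) : Q \subset Pcls -> #|cover Q| = (p * #|Q|)%N.
Proof.
move=> QP; have tQ := trivIsetS QP Pcls_triv.
rewrite -(eqP tQ) mulnC -sum_nat_const.
apply: eq_bigr => C /(subsetP QP)/imsetP[x _ ->]; exact: card_cls.
Qed.

Lemma sum_cover (Q : {set {set F}}) : Q \subset Pcls -> \sum_(x in cover Q) x = #|Q|%:R * sig.
Proof.
move=> QP; have tQ := trivIsetS QP Pcls_triv.
rewrite big_trivIset // mulr_natl -sumr_const.
apply: eq_bigr => C /(subsetP QP)/imsetP[x _ ->]; exact: sum_cls.
Qed.


Definition sg (g : {ffun {set F} -> 'I_p}) (x : F) : F := x + (val (g (cls x)))%:R.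

Lemma sg_cls g x : sg g x \in cls x.
Proof. by apply/clsP; exists (val (g (cls x))). Qed.

Lemma sg_inj g : injective (sg g).
Proof.
move=> x y e.
have cxy : cls x = cls y by rewrite -(cls_eq (sg_cls g x)) e (cls_eq (sg_cls g y)).
by move: e; rewrite /sg cxy => /addIr.
Qed.

Lemma good_sg g (A : {set F}) : good A -> sg g @: A = A.
Proof.
move=> gA; apply/eqP; rewrite eqEcard card_imset; last exact: sg_inj.
rewrite leqnn andbT; apply/subsetP => y /imsetP[x xA ->].
exact: (subsetP (forall_inP gA x xA)) _ (sg_cls g x).
Qed.

Definition cnt (A : {set F}) (b : F) :=
  #|[set g : {ffun {set F} -> 'I_p} | \sum_(x in sg g @: A) x == b]|.

Lemma sum_sg g (A : {set F}) : \sum_(x in sg g @: A) x = \sum_(x in A) x + \sum_(x in A) (val (g (cls x)))%:R.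
Proof.
by rewrite big_imset /=; [rewrite big_split | move=> x y _ _; apply: sg_inj].
Qed.

Lemma bad_eq (A : {set F}) : ~~ good A -> cnt A 1 = cnt A 0.
Proof.
case/forall_inPn => x0 x0A nC.
set C0 := cls x0.
set B := [set x in A | cls x == C0].
have n_gt0 : (0 < #|B|)%N by apply/card_gt0P; exists x0; rewrite inE x0A eqxx.
have BC0 : B \subset C0 by apply/subsetP => x; rewrite inE => /andP[_ /eqP <-]; exact: cls_refl.
have n_le : (#|B| <= p)%N by rewrite -(card_cls x0) subset_leq_card.
have n_lt : (#|B| < p)%N.
  rewrite ltn_neqAle n_le andbT; apply/negP => /eqP nB.
  have : B == C0 by rewrite eqEcard BC0 card_cls nB leqnn.
  move/eqP => BC; apply: (negP nC); rewrite -/C0 -BC.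
  by apply/subsetP => x; rewrite inE => /andP[].
have cop : coprime #|B| p by rewrite coprime_sym prime_coprime // gtnNdvd.
case: (Bezoutr #|B| p_gt0) => a _.
rewrite (eqP cop) (dvdn_pcharf hp) natrD => /eqP ea.
have ea' : (a%:R *+ #|B|) = -1 :> F.
  by apply/eqP; rewrite -subr_eq0 opprK addrC -mulr_natr -natrM ea.
pose tau (g : {ffun {set F} -> 'I_p}) : {ffun {set F} -> 'I_p} :=
  [ffun C => if C == C0 then Ordinal (ltn_pmod (val (g C) + a) p_gt0) else g C].
have tau_inj : injective tau.
  move=> g1 g2 e; apply/ffunP => C.
  move: e => /ffunP /(_ C); rewrite !ffunE.
  case: eqP => // _ /(congr1 val) /= /eqP.
  rewrite eqn_modDr !modn_small // => /eqP e'; exact: val_inj.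
have key : forall g, \sum_(x in sg (tau g) @: A) x = \sum_(x in sg g @: A) x - 1.
  move=> g; rewrite !sum_sg -addrA; congr (_ + _).
  rewrite (bigID (fun x => cls x == C0)) [in RHS](bigID (fun x => cls x == C0)) /=.
  have e1 : \sum_(i in A | cls i != C0) ((val (tau g (cls i))))%:R =
            \sum_(i in A | cls i != C0) ((val (g (cls i))))%:R :> F.
    by apply: eq_bigr => x /andP[_ /negbTE h]; rewrite ffunE h.
  have e2 : \sum_(i in A | cls i == C0) ((val (tau g (cls i))))%:R =
            \sum_(i in A | cls i == C0) ((val (g (cls i))))%:R - 1 :> F.
    rewrite -ea' -sumr_const.
    have eB : \sum_(i in B) (a%:R : F) = \sum_(i in A | cls i == C0) a%:R.
      by apply: eq_bigl => i; rewrite inE.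
    rewrite eB.
    rewrite -big_split /=; apply: eq_bigr => x /andP[_ /eqP ->].
    by rewrite ffunE eqxx /= natr_mod natrD.
  by rewrite e1 e2 addrAC.
rewrite /cnt -[RHS](card_preimset _ tau_inj); apply: eq_card => g.
by rewrite !inE key subr_eq0.
Qed.


Definition Sk k b := #|[set A : {set F} | (#|A| == k) && (\sum_(x in A) x == b)]|.
Definition Gk k b := #|[set A : {set F} | [&& good A, #|A| == k & \sum_(x in A) x == b]]|.

Lemma T_eq k b : (\sum_(A : {set F} | #|A| == k) cnt A b =
   #|{ffun {set F} -> 'I_p}| * Sk k b)%N.
Proof.
rewrite /cnt; under eq_bigr => A _ do rewrite -sum1_card.
rewrite (exchange_big_dep predT) //=.
rewrite -sum_nat_const; apply: eq_bigr => g _.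
rewrite sum1_card /Sk.
rewrite -(card_preimset _ (imset_inj (@sg_inj g))); apply: eq_card => A.
rewrite -topredE /= !inE card_imset //; exact: sg_inj.
Qed.

Lemma T_split k b : (\sum_(A : {set F} | #|A| == k) cnt A b =
   \sum_(A : {set F} | (#|A| == k) && ~~ good A) cnt A b + #|{ffun {set F} -> 'I_p}| * Gk k b)%N.
Proof.
rewrite (bigID good) /= addnC; congr (_ + _)%N.
rewrite mulnC -sum_nat_const.
rewrite [RHS](eq_bigl (fun A : {set F} => ((#|A| == k) && good A) && (\sum_(x in A) x == b))); last first.
  by move=> A; rewrite inE; case: (good A); case: (#|A| == k).
rewrite [RHS]big_mkcondr; apply: eq_bigr => A /andP[_ gA].
rewrite /cnt; case: eqP => [eb | neb].
  by apply: eq_card => g; rewrite !inE good_sg // eb eqxx.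
apply: eq_card0 => g; rewrite !inE good_sg //; exact/eqP.
Qed.

Lemma SG k : (Sk k 1%R + Gk k 0%R = Sk k 0%R + Gk k 1%R)%N.
Proof.
have cG : (0 < #|{ffun {set F} -> 'I_p}|)%N by rewrite card_ffun card_ord expn_gt0 p_gt0.
apply/eqP; rewrite -(eqn_pmul2l cG) !mulnDr -!T_eq !T_split.
rewrite -!addnA; apply/eqP; congr (_ + _)%N; last by rewrite addnC.
by apply: eq_bigr => A /andP[_ bA]; apply: bad_eq.
Qed.


Lemma QA_sub (A : {set F}) : QA A \subset Pcls.
Proof. by apply/subsetP => C; rewrite inE => /andP[]. Qed.

Lemma good_card (A : {set F}) : good A -> #|A| = (p * #|QA A|)%N.
Proof. by move=> gA; rewrite -{1}(good_cover gA) card_cover // QA_sub. Qed.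

Lemma good_sum (A : {set F}) : good A -> \sum_(x in A) x = #|QA A|%:R * sig.
Proof. by move=> gA; rewrite -{1}(good_cover gA) sum_cover // QA_sub. Qed.

Lemma card_good j : #|[set A : {set F} | good A & #|A| == (p * j)%N]| = 'C(#|Pcls|, j).
Proof.
rewrite -cards_draws -(@card_in_imset _ _ (@cover F)); last first.
  move=> Q1 Q2; rewrite !inE => /andP[Q1P _] /andP[Q2P _] e.
  by rewrite -(cover_good Q1P).2 -(cover_good Q2P).2 e.
apply: eq_card => A; rewrite inE; apply/andP/imsetP => [[gA /eqP Ak] | [Q]].
  exists (QA A); last by rewrite good_cover.
  rewrite inE QA_sub /= -(eqn_pmul2l p_gt0) -good_card // Ak eqxx //.
rewrite inE => /andP[QP /eqP Qj] ->; split; first exact: (cover_good QP).1.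
by rewrite card_cover // Qj.
Qed.

Lemma card_Pcls' : #|Pcls| = (#|F| %/ p)%N.
Proof. by rewrite -card_Pcls mulnK. Qed.

Lemma Gk_val k b : Gk k b =
  if (p %| k)%N then (if (k %/ p)%:R * sig == b then 'C(#|F| %/ p, k %/ p) else 0%N) else 0%N.
Proof.
rewrite /Gk; case: ifP => [pk | npk]; last first.
  apply: eq_card0 => A; rewrite !inE; apply/negP => /and3P[gA /eqP Ak _].
  by move: npk; rewrite -Ak good_card // dvdn_mulr.
have kj : k = (p * (k %/ p))%N by rewrite mulnC divnK.
case: ifP => [/eqP sb | nsb]; last first.
  apply: eq_card0 => A; rewrite !inE; apply/negP => /and3P[gA /eqP Ak /eqP Ab].
  move: nsb; rewrite -Ab good_sum //.
  have -> : #|QA A| = (k %/ p)%N by rewrite -Ak good_card // mulKn.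
  by rewrite eqxx.
rewrite -card_Pcls' -card_good -kj; apply: eq_card => A; rewrite !inE.
apply/and3P/andP => [[] | [gA Ak]] //; split => //.
rewrite good_sum // -sb; have -> // : #|QA A| = (k %/ p)%N.
by rewrite -(eqP Ak) good_card // mulKn.
Qed.

Lemma sig_val : sig = 'C(p, 2)%:R.
Proof. by rewrite /sig -bin2_sum big_mkord natr_sum. Qed.


Lemma sk_val k : (Sk k 1%R)%:Z - (Sk k 0%R)%:Z =
  if (p %| k)%N then - ((-1) ^+ (k + k %/ p) * ('C(#|F| %/ p, k %/ p))%:Z) else 0.
Proof.
have e : (Sk k 1%R)%:Z - (Sk k 0%R)%:Z = (Gk k 1%R)%:Z - (Gk k 0%R)%:Z.
  apply/eqP; rewrite subr_eq addrAC eq_sym subr_eq -!PoszD; apply/eqP; congr Posz.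
  by rewrite addnC SG addnC.
rewrite e !Gk_val; case: ifP => [pk | _]; last by rewrite subrr.
have kj : k = (p * (k %/ p))%N by rewrite mulnC divnK.
set j := (k %/ p)%N; set c := 'C(_, _).
have one0 : (1 : F) != 0 := oner_neq0 F.
case: (even_prime pr) => [p2 | podd].
  have s1 : sig = 1 by rewrite sig_val p2.
  have hj : j%:R = (odd j)%:R :> F by rewrite -modn2 -[in LHS]natr_mod p2.
  rewrite s1 mulr1 hj -signr_odd kj p2 oddD oddM /=.
  case: (odd j) => /=.
    by rewrite eqxx (negbTE one0) subr0 mulN1r opprK.
  by rewrite eq_sym (negbTE one0) eqxx sub0r expr0 mul1r.
have s0 : sig = 0.
  rewrite sig_val; apply/eqP; rewrite -(dvdn_pcharf hp) prime_dvd_bin //.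
  by rewrite odd_prime_gt2.
rewrite s0 mulr0 eq_sym (negbTE one0) eqxx sub0r -signr_odd kj oddD oddM podd /=.
by rewrite addbb expr0 mul1r.
Qed.

End Cls.

Section Final.
Variables (F : finFieldType) (p : nat).
Hypothesis hp : p \in [pchar F].

Let pr : prime p := pcharf_prime hp.
Let p_gt0 : (0 < p)%N := prime_gt0 pr.

Lemma NT_Sk k (b : F) : Nset (predT : {pred F}) k b = Sk k b.
Proof. by apply: eq_card => A; rewrite !inE sub_predT. Qed.

Lemma N0 b : Nset (@Fstar F) 0 b = (b == 0 : nat).
Proof.
case: eqP => [-> | nb].
  change (Nset (@Fstar F) 0 0 = 1%N); rewrite -(cards1 (set0 : {set F})); apply: eq_card => A; rewrite !inE.
  apply/idP/eqP => [/and3P[_ /eqP/cards0_eq -> _] // | ->].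
  by rewrite sub_Fstar inE cards0 big_set0 !eqxx.
apply: eq_card0 => A; rewrite !inE; apply/negP => /and3P[_ /eqP/cards0_eq -> /eqP].
by rewrite big_set0 => /esym.
Qed.

Definition ek k : int := (Nset (@Fstar F) k 1)%:Z - (Nset (@Fstar F) k 0)%:Z.

Lemma m_gt0 : (0 < #|F| %/ p)%N.
Proof. by rewrite -(card_Pcls' hp) card_gt0; apply/set0Pn; exists (cls p 0); apply: imset_f. Qed.

Lemma ek_val k : ek k = - ((-1) ^+ (k + k %/ p) * ('C(#|F| %/ p - 1, k %/ p))%:Z).
Proof.
elim: k => [|k IH].
  by rewrite /ek !N0 eqxx (negbTE (oner_neq0 F)) div0n bin0 /= sub0r mul1r.
have e : ek k.+1 = (Sk k.+1 (1 : F))%:Z - (Sk k.+1 (0 : F))%:Z - ek k.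
  rewrite -!NT_Sk !S_split // /ek /= !PoszD.
  by rewrite opprD addrACA addrK.
rewrite e (sk_val hp) IH divnS //.
set m := (#|F| %/ p)%N.
have mS : m = (m - 1).+1 by rewrite subn1 prednK // m_gt0.
case: ifP => pk /=; last first.
  by rewrite add0n sub0r opprK addSn exprS mulN1r mulNr opprK.
rewrite pk add1n {1}mS binS PoszD !addSn !addnS !exprS !mulN1r !opprK mulrDr opprD -addrA addNr addr0.
by [].
Qed.

End Final.

Unset Implicit Arguments.

Theorem corollary2p5 (F : finFieldType) (p k : nat)
  (hp : p \in [pchar F]) (hk : (k <= #|F| - 1)%N) :
  dk F k = - ((-1) ^+ (k + k %/ p) * (k`! * 'C(#|F| %/ p - 1, k %/ p))%:Z).
Proof.
case: k hk => [|k] _.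
  by rewrite /dk div0n bin0 fact0 expr0 mul1r.
rewrite /dk !Mcount_Nset !PoszM -mulrBr.
have := ek_val hp k.+1; rewrite /ek => ->.
by rewrite mulrN mulrCA.
Qed.
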